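(* Fix integers $N\ge 2$ and $K\ge 1$. The class $M^{\text{TransE}}$ is not universal, i.e. $\pi(\mathcal{M}^{\text{TransE}})\ne\pi(\mathbb{R}^{N\times N\times K})$.
   Context: There are $N$ entities and $K$ relations. A score-based model assigns a score $s_k(i,j)\in\mathbb{R}$ to each triple, $i,j\in\{1,\dots,N\}$, $k\in\{1,\dots,K\}$; its scoring tensor $\mathcal{S}\in\mathbb{R}^{N\times N\times K}$ has frontal slices $\mathbf{S}_k$ with $[\mathbf{S}_k]_{ij}=s_k(i,j)$. For a real $N\times N$ matrix $\mathbf{S}$, $\pi(\mathbf{S})$ is the matrix of dense ranks: $\pi_{ij}(\mathbf{S})=1+$ (number of distinct values among entries of $\mathbf{S}$ strictly larger than $s_{ij}$). For tensors, $\pi$ acts slicewise; for a set $X$, $\pi(X)=\{\pi(x):x\in X\}$; thus $\pi(\mathbb{R}^{N\times N\times K})$ is the set of all ranking tensors. TransE of size $r$: parameters $\mathbf{A}\in\mathbb{R}^{N\times r}$ (rows $\mathbf{a}_i$), $\mathbf{R}\in\mathbb{R}^{K\times r}$ (rows $\mathbf{r}_k$), score $-\|\mathbf{a}_i+\mathbf{r}_k-\mathbf{a}_j\|_2^2$. $\mathcal{M}^{\text{TransE}}$ is the set of scoring tensors of all TransE models of all sizes $r\in\mathbb{N}^+$. A class is universal if it can represent every ranking tensor. *)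

(* Defs.v *)
From mathcomp Require Import all_boot all_order all_algebra.
From mathcomp Require Import reals.
Set Implicit Arguments. Unset Strict Implicit. Unset Printing Implicit Defensive.
Import Order.TTheory GRing.Theory Num.Theory.
Local Open Scope ring_scope.

(* A scoring tensor S in R^{N x N x K}: S i j k = s_k(i,j). *)
Definition tensor (R : realType) (N K : nat) := 'I_N -> 'I_N -> 'I_K -> R.

Definition rtensor (N K : nat) := 'I_N -> 'I_N -> 'I_K -> nat.

Definition dense_rank (R : realType) (N : nat) (M : 'I_N -> 'I_N -> R)
    (i j : 'I_N) : nat :=
  (size (undup [seq M p.1 p.2 | p : 'I_N * 'I_N <-
                   [seq q <- enum {: 'I_N * 'I_N} | (M i j < M q.1 q.2)%R]])).+1%N.

Definition pi_tensor (R : realType) (N K : nat) (S : tensor R N K) : rtensor N K :=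
  fun i j k => dense_rank (fun a b => S a b k) i j.

Definition pi_set (R : realType) (N K : nat) (X : tensor R N K -> Prop)
    : rtensor N K -> Prop :=
  fun P => exists S, X S /\ pi_tensor S = P.

Definition transE_score (R : realType) (N K r : nat)
    (A : 'M[R]_(N, r)) (Rl : 'M[R]_(K, r)) : tensor R N K :=
  fun i j k => - \sum_(l < r) (A i l + Rl k l - A j l) ^+ 2.

Definition M_TransE (R : realType) (N K : nat) : tensor R N K -> Prop :=
  fun S => exists r : nat, (0 < r)%N /\
             exists (A : 'M[R]_(N, r)) (Rl : 'M[R]_(K, r)), S = transE_score A Rl.

Definition all_tensors (R : realType) (N K : nat) : tensor R N K -> Prop :=
  fun _ => True.

(* Main.v *)
Require Import Defs.
From mathcomp Require Import all_boot all_order all_algebra.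
From mathcomp Require Import reals.
Set Implicit Arguments. Unset Strict Implicit. Unset Printing Implicit Defensive.
Import Order.TTheory GRing.Theory Num.Theory.
Local Open Scope ring_scope.

Theorem corollary2 (R : realType) (N K : nat) (hN : (2 <= N)%N) (hK : (1 <= K)%N) :
  @pi_set R N K (@M_TransE R N K) <> @pi_set R N K (@all_tensors R N K).
Proof.
have h0 : (0 < N)%N by apply: leq_trans hN.
pose i0 : 'I_N := Ordinal h0.
pose i1 : 'I_N := Ordinal hN.
pose k0 : 'I_K := Ordinal hK.
pose S0 : tensor R N K := fun i j k => if (i == i0) && (j == i0) then 1%R else 0%R.
move=> E.
have : pi_set (@all_tensors R N K) (pi_tensor S0) by exists S0.
rewrite -E => -[S [[r [_ [A [Rl ->]]]] HS]].
have Hd : forall i, transE_score A Rl i i k0 = transE_score A Rl i0 i0 k0.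
  move=> i; rewrite /transE_score; congr (- _); apply: eq_bigr => l _.
  by rewrite (addrAC (A i l)) (addrAC (A i0 l)) !subrr.
have e1 : pi_tensor S0 i1 i1 k0 = pi_tensor S0 i0 i0 k0.
  by rewrite -HS /pi_tensor /dense_rank Hd.
move: e1; rewrite /pi_tensor /dense_rank.
have -> : [seq q <- enum {: 'I_N * 'I_N} | (S0 i0 i0 k0 < S0 q.1 q.2 k0)%R] = [::].
  apply/eqP; rewrite -[_ == _]negbK -has_filter; apply/hasPn => q _.
  rewrite /S0 eqxx /=; case: ifP => _; first by rewrite ltxx.
  by rewrite ltr10.
set s := undup _.
have : (S0 i0 i0 k0) \in s.
  rewrite mem_undup; apply/mapP; exists (i0, i0) => //.
  rewrite mem_filter mem_enum andbT /S0 /=.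
  exact: ltr01.
by case: s.
Qed.
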